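(* Under the Standing Setup (see context), Algorithm 1 is well defined: for every $k\ge0$, given $x^k\in B[\bar x,\beta]$ a point $z^k\in B(\bar x,\delta)$ as in step (a) exists. Moreover, for all $k\ge 0$, $$x^{k+1}=P_{\lambda_k}f(x^k)\quad\text{and}\quad x^k\in B[\bar x,\beta],$$ and $\sum_{k}\|x^k-x^{k+1}\|^2<\infty$.
   Context: $B(x,r)$, $B[x,r]$: open and closed Euclidean balls. For $\mu>0$: $e_\mu f(x):=\min_y\{f(y)+\frac{1}{2\mu}\|y-x\|^2\}$ (Moreau envelope), $P_\mu f(x):=\operatorname{argmin}_y\{f(y)+\frac{1}{2\mu}\|y-x\|^2\}$ (proximal operator). $\partial f$: limiting subdifferential. $f$ is $\rho$-weakly convex on $U$ if $f(\alpha x+(1-\alpha)y)\le \alpha f(x)+(1-\alpha)f(y)+\frac{\rho\alpha(1-\alpha)}{2}\|x-y\|^2$ for all $x,y\in U$, $\alpha\in[0,1]$. Standing Fact (cited): if $f$ is $\rho$-weakly convex on $\mathbb{R}^n$, $\rho>0$, $0\in\partial f(\bar x)$ and $\mu\in(0,1/\rho)$, there is $\alpha>0$ such that on $B[\bar x,\alpha]$, $P_\mu f$ is single-valued, $1/(1-\mu\rho)$-Lipschitz, equal to $(I+\mu\partial f)^{-1}$, and $e_\mu f$ is $C^1$ with $\nabla e_\mu f(x)=\mu^{-1}(x-P_\mu f(x))$. Standing Setup: $f:\mathbb{R}^n\to\mathbb{R}\cup\{+\infty\}$ is proper, lower semicontinuous, bounded below and $\rho$-weakly convex on $\mathbb{R}^n$,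 $\rho>0$; $\bar x\in\operatorname{dom}f$ with $0\in\partial f(\bar x)$. Fix $\bar\lambda>0$ and bounded sequences $\{\gamma_k\},\{\lambda_k\}$ with $0<\bar\lambda<2\gamma_k<\lambda_k<1/\rho$ for all $k$. Let $\delta>0$ be such that, for every $k$, the Standing Fact holds on $B[\bar x,\delta]$ (i.e. $\delta$ is smaller than the corresponding radius $\alpha$) for $\mu=\gamma_k$ and $\mu=\lambda_k$, and (Assumption 1) the Moreau envelopes $e_{\gamma_k}f$ and $e_{\lambda_k}f$ are convex on $B[\bar x,\delta]$. For each $k$ let $L_k:=1+\frac{\lambda_k-\gamma_k}{\gamma_k}\bigl(1+\frac{1}{1-\gamma_k\rho}\bigr)$, pick $\sigma_k\in(0,2/L_k^2)$, set $\kappa_k:=1-2\sigma_k+\sigma_k^2L_k^2$, and let $\beta>0$ satisfy $\beta<\min\{\delta,\frac{\delta}{\sigma_k}(1-\sqrt{\kappa_k})\}$ for all $k$. Algorithm 1: choose $x^0\in B[\bar x,\beta]$. Given $x^k\in B[\bar x,\beta]$: (a) compute $z^k\in B(\bar x,\delta)$ with $z^k=x^k-(\lambda_k-\gamma_k)\nabla e_{\gamma_k}f(z^k)$; (b) set $x^{k+1}=z^k-\gamma_k(\lambda_k-\gamma_k)^{-1}(x^k-z^k)$. *)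

(* Defs.v *)
(* R^n is modelled as row vectors 'rV[R]_n with the EUCLIDEAN norm defined below
   (the library's own norm on matrices is the max-norm; topology/filters coincide). *)
From HB Require Import structures.
From mathcomp Require Import all_boot all_order all_algebra.
From mathcomp Require Import all_classical all_reals all_analysis.
Set Implicit Arguments. Unset Strict Implicit. Unset Printing Implicit Defensive.
Import Order.TTheory GRing.Theory Num.Theory.
Import numFieldNormedType.Exports.
Local Open Scope classical_set_scope.
Local Open Scope ring_scope.

Section Defs.
Context {R : realType} {n : nat}.
Local Notation V := 'rV[R]_n.

Definition dotv (u v : V) : R := \sum_(i < n) u ord0 i * v ord0 i.
Definition enorm (u : V) : R := Num.sqrt (dotv u u).

Definition oball (x : V) (r : R) : set V := [set y | enorm (y - x) < r].
Definition cball (x : V) (r : R) : set V := [set y | enorm (y - x) <= r].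

(* Moreau envelope e_mu f (real valued; finite when f is proper and bounded below) *)
Definition moreau (mu : R) (f : V -> \bar R) (x : V) : R :=
  fine (ereal_inf [set (f y + ((2 * mu)^-1 * enorm (y - x) ^+ 2)%:E)%E | y in setT]).

(* proximal operator P_mu f (x), as the (possibly empty/multi) argmin set *)
Definition prox (mu : R) (f : V -> \bar R) (x : V) : set V :=
  [set p | forall y, (f p + ((2 * mu)^-1 * enorm (p - x) ^+ 2)%:E <=
                      f y + ((2 * mu)^-1 * enorm (y - x) ^+ 2)%:E)%E].

Definition weakly_convex_on (rho : R) (U : set V) (f : V -> \bar R) : Prop :=
  forall x y, U x -> U y -> forall a : R, 0 <= a <= 1 ->
    (f (a *: x + (1 - a) *: y)%R <=
       a%:E * f x + (1 - a)%:E * f y + (rho * a * (1 - a) / 2 * enorm (x - y) ^+ 2)%:E)%E.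

Definition convex_fun_on (U : set V) (F : V -> R) : Prop :=
  forall x y, U x -> U y -> forall a : R, 0 <= a <= 1 ->
    F (a *: x + (1 - a) *: y) <= a * F x + (1 - a) * F y.

(* regular (Frechet) subdifferential: v is a regular subgradient of f at x iff
   f x is finite and liminf_{y -> x, y <> x} (f y - f x - <v, y - x>)/||y - x|| >= 0 *)
Definition frechet_subgrad (f : V -> \bar R) (x v : V) : Prop :=
  f x \is a fin_num /\
  forall eps : R, 0 < eps -> \forall y \near x,
     ((fine (f x) + dotv v (y - x) - eps * enorm (y - x))%:E <= f y)%E.

Definition limiting_subdiff (f : V -> \bar R) (x : V) : set V :=
  [set v | exists (xk vk : nat -> V),
     [/\ xk @ \oo --> x, (f \o xk) @ \oo --> f x, vk @ \oo --> v &
         forall k, frechet_subgrad f (xk k) (vk k)]].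

Definition is_gradient (F : V -> R) (x g : V) : Prop :=
  (fun h : V => (F (x + h) - F x - dotv g h) / enorm h) @ (0 : V)^' --> (0 : R).

(* Conclusions of the cited Standing Fact, holding on B[xbar, r] for parameter mu:
   P_mu f single-valued, 1/(1 - mu rho)-Lipschitz, equal to (I + mu df)^{-1},
   and e_mu f differentiable with gradient mu^{-1}(x - P_mu f(x))
   (continuity of the gradient then follows from the Lipschitz property). *)
Definition standing_fact (f : V -> \bar R) (rho : R) (xbar : V) (r mu : R) : Prop :=
  [/\ forall x, cball xbar r x -> exists p, prox mu f x = [set p],
      forall x y p q, cball xbar r x -> cball xbar r y ->
        prox mu f x p -> prox mu f y q ->
        enorm (p - q) <= (1 - mu * rho)^-1 * enorm (x - y),
      forall x, cball xbar r x ->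
        prox mu f x = [set p | limiting_subdiff f p (mu^-1 *: (x - p))] &
      forall x p, cball xbar r x -> prox mu f x p ->
        is_gradient (moreau mu f) x (mu^-1 *: (x - p))].

Definition step_a (f : V -> \bar R) (xbar : V) (delta gam lam : R) (x z : V) : Prop :=
  [/\ oball xbar delta z &
      exists g, is_gradient (moreau gam f) z g /\ z = x - (lam - gam) *: g].

End Defs.

Definition Lconst {R : realType} (rho gam lam : R) : R :=
  1 + (lam - gam) / gam * (1 + (1 - gam * rho)^-1).
Definition kappa {R : realType} (rho gam lam sig : R) : R :=
  1 - 2 * sig + sig ^+ 2 * (Lconst rho gam lam) ^+ 2.

(* Main.v *)
Set Warnings "-all".
Set Implicit Arguments. Unset Strict Implicit.
Require Import Defs.
From HB Require Import structures.
From mathcomp Require Import all_boot all_order all_algebra.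
From mathcomp Require Import all_classical all_reals all_analysis.
From mathcomp Require Import ring lra.
Import Order.TTheory GRing.Theory Num.Theory.
Import numFieldNormedType.Exports.
Local Open Scope classical_set_scope.
Local Open Scope ring_scope.
Section Alg.
Context {R : realType} {n : nat}.
Local Notation V := 'rV[R]_n.

Lemma dotvC (u v : V) : dotv u v = dotv v u.
Proof. by apply: eq_bigr => i _; rewrite mulrC. Qed.

Lemma dotvDl (u v w : V) : dotv (u + v) w = dotv u w + dotv v w.
Proof. rewrite /dotv -big_split; apply: eq_bigr => i _; rewrite !mxE /=; exact: mulrDl. Qed.

Lemma dotvZl (a : R) (u w : V) : dotv (a *: u) w = a * dotv u w.
Proof. rewrite /dotv mulr_sumr; apply: eq_bigr => i _; rewrite !mxE; ring. Qed.

Lemma dotvNl (u w : V) : dotv (- u) w = - dotv u w.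
Proof. by rewrite -scaleN1r dotvZl mulN1r. Qed.

Lemma dotvBl (u v w : V) : dotv (u - v) w = dotv u w - dotv v w.
Proof. by rewrite dotvDl dotvNl. Qed.

Lemma dotvDr (u v w : V) : dotv w (u + v) = dotv w u + dotv w v.
Proof. by rewrite dotvC dotvDl !(dotvC w). Qed.
Lemma dotvZr (a : R) (u w : V) : dotv w (a *: u) = a * dotv w u.
Proof. by rewrite dotvC dotvZl dotvC. Qed.
Lemma dotvBr (u v w : V) : dotv w (u - v) = dotv w u - dotv w v.
Proof. by rewrite dotvC dotvBl !(dotvC w). Qed.
Lemma dotv0r (w : V) : dotv w 0 = 0.
Proof. by rewrite /dotv big1 // => i _; rewrite mxE mulr0. Qed.
Lemma dotv0l (w : V) : dotv 0 w = 0.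
Proof. by rewrite dotvC dotv0r. Qed.

Lemma dotv_ge0 (u : V) : 0 <= dotv u u.
Proof. by apply: sumr_ge0 => i _; rewrite -expr2 sqr_ge0. Qed.

Lemma dotv_eq0 (u : V) : dotv u u = 0 -> u = 0.
Proof.
move=> /eqP; rewrite psumr_eq0; last by move=> i _; rewrite -expr2 sqr_ge0.
move=> /allP H; apply/rowP => i; rewrite mxE.
have := H i (mem_index_enum i); rewrite /= -expr2 sqrf_eq0 => /eqP.
by rewrite (ord1 ord0).
Qed.

Lemma enorm_ge0 (u : V) : 0 <= enorm u.
Proof. exact: sqrtr_ge0. Qed.

Lemma enorm_sq (u : V) : enorm u ^+ 2 = dotv u u.
Proof. by rewrite sqr_sqrtr // dotv_ge0. Qed.

Lemma enorm_eq0 (u : V) : enorm u = 0 -> u = 0.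
Proof. by move=> h; apply: dotv_eq0; rewrite -enorm_sq h expr0n. Qed.

Lemma enorm0 : enorm (0 : V) = 0.
Proof. by rewrite /enorm dotv0r sqrtr0. Qed.

Lemma enormZ (a : R) (u : V) : enorm (a *: u) = `|a| * enorm u.
Proof.
rewrite /enorm dotvZl dotvZr mulrA -expr2 sqrtrM ?sqr_ge0 //.
by rewrite sqrtr_sqr.
Qed.

Lemma enormN (u : V) : enorm (- u) = enorm u.
Proof. by rewrite -scaleN1r enormZ normrN1 mul1r. Qed.

Lemma enormB (u v : V) : enorm (u - v) = enorm (v - u).
Proof. by rewrite -enormN opprB. Qed.

Lemma cauchy_schwarz (u v : V) : dotv u v <= enorm u * enorm v.
Proof.
have [v0|vn0] := eqVneq v 0.
  by rewrite v0 dotv0r enorm0 mulr0.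
have hv : 0 < dotv v v.
  rewrite lt_def dotv_ge0 andbT; apply/eqP => /dotv_eq0; exact/eqP.
pose t := dotv u v / dotv v v.
have h := dotv_ge0 (u - t *: v).
rewrite dotvBl !dotvBr !dotvZl !dotvZr (dotvC v u) in h.
have h2 : dotv u v ^+ 2 <= dotv u u * dotv v v.
  have e : dotv u u - dotv u v * dotv u v / dotv v v =
       dotv u u - t * dotv u v - (t * dotv u v - t * (t * dotv v v)).
    rewrite /t; field; exact: lt0r_neq0.
  move: h; rewrite -e subr_ge0 ler_pdivrMr // => h.
have [uv0|uvp] := lerP (dotv u v) 0.
  by apply: (le_trans uv0); rewrite mulr_ge0 // enorm_ge0.
rewrite -(ler_pXn2r (n:=2)) //; last by rewrite nnegrE mulr_ge0 ?enorm_ge0.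
  by rewrite exprMn !enorm_sq.
by rewrite nnegrE ltW.
Qed.

Lemma enormD_sq (u v : V) :
  enorm (u + v) ^+ 2 = enorm u ^+ 2 + 2 * dotv u v + enorm v ^+ 2.
Proof. rewrite !enorm_sq dotvDl !dotvDr (dotvC v u); ring. Qed.

Lemma enormD (u v : V) : enorm (u + v) <= enorm u + enorm v.
Proof.
rewrite -(ler_pXn2r (n:=2)) // ?nnegrE ?addr_ge0 ?enorm_ge0 //.
rewrite enormD_sq sqrrD.
have := cauchy_schwarz u v; nra.
Qed.

Lemma enorm_triangle (a b c : V) : enorm (a - c) <= enorm (a - b) + enorm (b - c).
Proof. by apply: le_trans (enormD (a - b) (b - c)); rewrite addrA subrK. Qed.

End Alg.
Section Grad.
Context {R : realType} {n : nat}.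
Local Notation V := 'rV[R]_n.

Lemma grad_ext (F : V -> R) (x g : V) : is_gradient F x g ->
  forall e, 0 < e -> exists2 r, 0 < r & forall h : V, h != 0 -> `|h| < r ->
    `|(F (x + h) - F x - dotv g h) / enorm h| < e.
Proof.
move=> /cvgrPdist_lt H e e0; have := H e e0.
rewrite near_withinE => /nbhs_ballP [r /= r0 Hr]; exists r => // h h0 hr.
have := Hr h; rewrite -ball_normE /= sub0r normrN => /(_ hr h0).
by rewrite sub0r normrN.
Qed.
End Grad.
Section GradIneq.
Context {R : realType} {n : nat}.
Local Notation V := 'rV[R]_n.

Lemma enorm_gt0 {u : V} : u != 0 -> 0 < enorm u.
Proof.
move=> u0; rewrite lt_def enorm_ge0 andbT; apply/eqP => /enorm_eq0; exact/eqP.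
Qed.

Lemma small_dir (d : V) (r : R) : 0 < r -> d != 0 ->
  exists t : R, [/\ 0 < t, t <= 1, t *: d != 0 & `|t *: d| < r].
Proof.
move=> r0 d0; have nd : 0 <= `|d| by [].
exists (r / (r + `|d|)); split.
- by rewrite divr_gt0 // ltr_wpDr.
- by rewrite ler_pdivrMr ?mul1r ?lerDl // ltr_wpDr.
- by rewrite scaler_eq0 negb_or d0 andbT mulf_neq0 // ?invr_eq0 lt0r_neq0 // ltr_wpDr.
- rewrite normrZ ger0_norm; last by rewrite divr_ge0 // ?addr_ge0 // ltW.
  rewrite mulrAC ltr_pdivrMr ?ltr_wpDr //.
  by rewrite ltr_pM2l //; lra.
Qed.

Lemma grad_ineq (U : set V) (F : V -> R) (a b g : V) :
  convex_fun_on U F -> U a -> U b -> is_gradient F a g ->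
  F a + dotv g (b - a) <= F b.
Proof.
move=> cvx Ua Ub hg.
have [d0|d0] := eqVneq (b - a) 0.
  by rewrite d0 dotv0r addr0; move/eqP: d0; rewrite subr_eq0 => /eqP ->.
have En := enorm_gt0 d0.
apply/ler_addgt0Pr => e e0.
have [r r0 Hr] := grad_ext hg (divr_gt0 e0 En).
have [t [t0 t1 h0 hr]] := small_dir r0 d0.
have := Hr _ h0 hr; rewrite enormZ (gtr0_norm t0) dotvZr.
have eq1 : a + t *: (b - a) = t *: b + (1 - t) *: a.
  by apply/rowP => i; rewrite !mxE; ring.
rewrite eq1 ltr_norml => /andP [h1 _].
have Ep : 0 < t * enorm (b - a) by rewrite mulr_gt0.
move: h1; rewrite ltr_pdivlMr // => h1.
have cv := cvx b a Ub Ua t; rewrite t1 ltW //= in cv.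
have key : t * (F a + dotv g (b - a)) <= t * (F b + e).
  have e2 : - (e / enorm (b - a)) * (t * enorm (b - a)) = - (e * t).
    by field; exact: lt0r_neq0.
  rewrite e2 in h1.
  have := cv isT; lra.
by rewrite ler_pM2l in key.
Qed.

Lemma grad_mono (U : set V) (F : V -> R) (a b ga gb : V) :
  convex_fun_on U F -> U a -> U b -> is_gradient F a ga -> is_gradient F b gb ->
  0 <= dotv (gb - ga) (b - a).
Proof.
move=> cvx Ua Ub h1 h2.
have i1 := grad_ineq cvx Ua Ub h1.
have i2 := grad_ineq cvx Ub Ua h2.
have e : dotv gb (a - b) = - dotv gb (b - a) by rewrite !dotvBr; ring.
rewrite dotvBl; rewrite e in i2; lra.
Qed.

Lemma grad_unique (F : V -> R) (x g1 g2 : V) :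
  is_gradient F x g1 -> is_gradient F x g2 -> g1 = g2.
Proof.
move=> h1 h2; apply/eqP; rewrite eq_sym -subr_eq0; apply/negPn/negP => d0.
have En := enorm_gt0 d0.
have e0 : 0 < enorm (g2 - g1) / 2 by rewrite divr_gt0.
have [r1 r10 H1] := grad_ext h1 e0.
have [r2 r20 H2] := grad_ext h2 e0.
have rm : 0 < Num.min r1 r2 by rewrite lt_min r10 r20.
have [t [t0 _ h0 hr]] := small_dir rm d0.
move: hr; rewrite lt_min => /andP [hr1 hr2].
have := H1 _ h0 hr1; have := H2 _ h0 hr2.
set A := F (x + t *: (g2 - g1)) - F x.
rewrite !enormZ !(gtr0_norm t0) !dotvZr.
set D := t * enorm (g2 - g1).
have Dp : 0 < D by rewrite mulr_gt0.
move=> q2 q1.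
have hq : (A - t * dotv g1 (g2 - g1)) / D - (A - t * dotv g2 (g2 - g1)) / D
   = enorm (g2 - g1).
  rewrite -mulrBl.
  have -> : A - t * dotv g1 (g2 - g1) - (A - t * dotv g2 (g2 - g1))
     = t * dotv (g2 - g1) (g2 - g1) by rewrite dotvBl; ring.
  rewrite -enorm_sq /D; field; apply/andP; split; exact: lt0r_neq0.
have := ler_normB ((A - t * dotv g1 (g2 - g1)) / D) ((A - t * dotv g2 (g2 - g1)) / D).
rewrite hq ger0_norm ?enorm_ge0 // => hh.
have := ltrD q1 q2; lra.
Qed.
End GradIneq.
Section Key.
Context {R : realType} {n : nat}.
Local Notation V := 'rV[R]_n.

Lemma enorm_sqDZ (u g : V) (a : R) :
  enorm (u + a *: g) ^+ 2 = enorm u ^+ 2 + 2 * a * dotv u g + a ^+ 2 * enorm g ^+ 2.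
Proof. rewrite !enorm_sq dotvDl !dotvDr !dotvZl !dotvZr (dotvC g u); ring. Qed.

Lemma enorm_le_sq (u v : V) : enorm u ^+ 2 <= enorm v ^+ 2 -> enorm u <= enorm v.
Proof. by rewrite ler_pXn2r // nnegrE enorm_ge0. Qed.

Lemma enorm_conv (c : R) (a b : V) : 0 <= c <= 1 ->
  enorm (c *: a + (1 - c) *: b) <= c * enorm a + (1 - c) * enorm b.
Proof.
move=> /andP [c0 c1]; apply: le_trans (enormD _ _) _.
rewrite !enormZ ger0_norm // ger0_norm ?subr_ge0 //.
Qed.

Context (f : V -> \bar R) (rho : R) (xb : V) (delta gam lam : R).
Context (rho0 : 0 < rho) (gam0 : 0 < gam) (gl : 2 * gam < lam) (lr : lam < rho^-1).
Context (SFg : standing_fact f rho xb delta gam) (SFl : standing_fact f rho xb delta lam).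
Context (CV : convex_fun_on (cball xb delta) (moreau gam f)).
Context (d0 : 0 < delta) (L0 : limiting_subdiff f xb 0).

Lemma cball_c : cball xb delta xb.
Proof. by rewrite /cball /= subrr enorm0 ltW. Qed.

Lemma grad_xb : is_gradient (moreau gam f) xb 0.
Proof.
case: SFg => _ _ c3 c4.
have hp : prox gam f xb xb.
  by rewrite (c3 _ cball_c) /= subrr scaler0.
by have := c4 _ _ cball_c hp; rewrite subrr scaler0.
Qed.

Definition zz (x p : V) : V := (gam / lam) *: x + (1 - gam / lam) *: p.

Lemma lam0 : 0 < lam.
Proof. move: (gam0) (gl); lra. Qed.

Lemma gl01 : 0 <= gam / lam <= 1.
Proof.
have l0 := lam0.
apply/andP; split; first by rewrite divr_ge0 // ltW.
by rewrite ler_pdivrMr // mul1r; move: (gam0) (gl); lra.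
Qed.

Lemma key_lemma (x p : V) : cball xb delta x -> prox lam f x p ->
  cball xb delta (zz x p) ->
  [/\ prox gam f (zz x p) p,
      is_gradient (moreau gam f) (zz x p) (lam^-1 *: (x - p)),
      zz x p = x - (lam - gam) *: (lam^-1 *: (x - p)) &
      enorm (p - xb) <= enorm (x - xb)].
Proof.
move=> cx px cz.
have l0 := lam0.
have lne : lam != 0 by exact: lt0r_neq0.
have gne : gam != 0 by exact: lt0r_neq0.
case: SFg => _ _ g3 g4; case: SFl => _ _ l3 _.
have eg : gam^-1 *: (zz x p - p) = lam^-1 *: (x - p).
  by apply/rowP => i; rewrite !mxE; field; rewrite lne gne.
have pz : prox gam f (zz x p) p.
  by rewrite (g3 _ cz) /= eg; move: px; rewrite (l3 _ cx).
have gz := g4 _ _ cz pz; rewrite eg in gz.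
have ez : zz x p = x - (lam - gam) *: (lam^-1 *: (x - p)).
  by apply/rowP => i; rewrite !mxE; field.
split => //.
have mono := grad_mono CV cball_c cz grad_xb gz.
rewrite subr0 in mono.
set g := lam^-1 *: (x - p) in mono gz ez *.
set u := zz x p - xb in mono.
have ex : x - xb = u + (lam - gam) *: g by rewrite /u ez; apply/rowP => i; rewrite !mxE; ring.
have ep : p - xb = u + (- gam) *: g.
  rewrite /u /g /zz; apply/rowP => i; rewrite !mxE; field; exact: lne.
apply: enorm_le_sq; rewrite ex ep !enorm_sqDZ (dotvC u g).
have := enorm_ge0 g => hg.
have : 0 <= lam * (lam - 2 * gam) * enorm g ^+ 2.
  by rewrite mulr_ge0 ?sqr_ge0 // mulr_ge0 ?ltW //; move: (gl); lra.
move: (gam0) mono; nra.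
Qed.

Lemma zz_bound (x p : V) : enorm (p - xb) <= enorm (x - xb) ->
  enorm (zz x p - xb) <= enorm (x - xb).
Proof.
move=> h.
have -> : zz x p - xb = (gam / lam) *: (x - xb) + (1 - gam / lam) *: (p - xb).
  by rewrite /zz; apply/rowP => i; rewrite !mxE; ring.
apply: le_trans (enorm_conv _ _ gl01) _.
have := gl01 => /andP [c0 c1].
have : (1 - gam / lam) * enorm (p - xb) <= (1 - gam / lam) * enorm (x - xb).
  by rewrite ler_wpM2l // subr_ge0.
lra.
Qed.

Lemma zz_diff (x1 p1 x2 p2 : V) :
  enorm (zz x1 p1 - zz x2 p2) <= enorm (x1 - x2) + enorm (p1 - p2).
Proof.
have -> : zz x1 p1 - zz x2 p2 = (gam / lam) *: (x1 - x2) + (1 - gam / lam) *: (p1 - p2).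
  by rewrite /zz; apply/rowP => i; rewrite !mxE; ring.
apply: le_trans (enorm_conv _ _ gl01) _.
have := gl01 => /andP [c0 c1].
have := enorm_ge0 (x1 - x2); have := enorm_ge0 (p1 - p2); nra.
Qed.

End Key.
Section Homot.
Context {R : realType} {n : nat}.
Local Notation V := 'rV[R]_n.
Context (f : V -> \bar R) (rho : R) (xb : V) (delta gam lam beta : R).
Context (rho0 : 0 < rho) (gam0 : 0 < gam) (gl : 2 * gam < lam) (lr : lam < rho^-1).
Context (SFg : standing_fact f rho xb delta gam) (SFl : standing_fact f rho xb delta lam).
Context (CV : convex_fun_on (cball xb delta) (moreau gam f)).
Context (L0 : limiting_subdiff f xb 0).
Context (b0 : 0 < beta) (bd : beta < delta).

Let d0 : 0 < delta. Proof. move: (b0) (bd); lra. Qed.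

Lemma prox_xb : prox lam f xb xb.
Proof.
case: SFl => _ _ l3 _.
by rewrite (l3 _ (cball_c xb d0)) /= subrr scaler0.
Qed.

Lemma homotopy (x : V) : cball xb beta x ->
  exists p, prox lam f x p /\ enorm (p - xb) <= enorm (x - xb).
Proof.
move=> cx; rewrite /cball /= in cx.
have l0 : 0 < lam by move: (gam0) (gl); lra.
have lrho : lam * rho < 1.
  by rewrite -ltr_pdivlMr // div1r.
set K := (1 - lam * rho)^-1.
have K0 : 0 < K by rewrite invr_gt0 subr_gt0.
set c := 1 + K.
have c0 : 0 < c by rewrite /c; lra.
have db : 0 < delta - beta by move: (bd); lra.
set N := (Num.Def.archi_bound (c * beta / (delta - beta))).+1.
have hN0 : (0 < N%:R :> R) by rewrite ltr0n.
have hN : c * beta / N%:R <= delta - beta.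
  have h := @archi_boundP R (c * beta / (delta - beta))
    (divr_ge0 (mulr_ge0 (ltW c0) (ltW b0)) (ltW db)).
  have h' : c * beta / (delta - beta) < N%:R.
    apply: lt_trans h _; rewrite ltr_nat /N; exact: ltnSn.
  rewrite ler_pdivrMr // [X in _ <= X]mulrC; rewrite ltr_pdivrMr // in h'.
  exact: ltW.
pose xj (j : nat) : V := xb + (j%:R / N%:R) *: (x - xb).
have exj j : enorm (xj j - xb) = j%:R / N%:R * enorm (x - xb).
  by rewrite /xj addrC addKr enormZ ger0_norm // divr_ge0.
have cxj j : (j <= N)%N -> enorm (xj j - xb) <= beta.
  move=> jN; rewrite exj.
  have : j%:R / N%:R <= (1 : R) by rewrite ler_pdivrMr // mul1r ler_nat.
  have := enorm_ge0 (x - xb); have : 0 <= j%:R / N%:R :> R by rewrite divr_ge0.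
  move: cx; nra.
have step j : (j.+1 <= N)%N -> enorm (xj j.+1 - xj j) = enorm (x - xb) / N%:R.
  move=> _.
  have -> : xj j.+1 - xj j = N%:R^-1 *: (x - xb).
    rewrite /xj -natr1; apply/rowP => i; rewrite !mxE; field.
    exact: lt0r_neq0.
  by rewrite enormZ ger0_norm ?invr_ge0 ?ltW // mulrC.
have claim j : (j <= N)%N ->
    exists p, prox lam f (xj j) p /\ enorm (p - xb) <= enorm (xj j - xb).
  elim: j => [_|j IH jN].
    exists xb; rewrite /xj mul0r scale0r addr0; split; first exact: prox_xb.
    by rewrite subrr.
  have [p [pj hpj]] := IH (ltnW jN).
  case: (SFl) => l1 l2 _ _.
  have cj1 : cball xb delta (xj j.+1) by rewrite /cball /=; move: (cxj _ jN) (bd); lra.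
  have cj : cball xb delta (xj j) by rewrite /cball /=; move: (cxj _ (ltnW jN)) (bd); lra.
  have [p' hp'] := l1 _ cj1.
  have pp' : prox lam f (xj j.+1) p' by rewrite hp'.
  have lip := l2 _ _ _ _ cj1 cj pp' pj.
  rewrite -/K (step _ jN) in lip.
  have bz := zz_bound gam0 gl hpj.
  have dz := zz_diff gam0 gl (xj j.+1) p' (xj j) p.
  rewrite (step _ jN) in dz.
  have tri := enorm_triangle (zz gam lam (xj j.+1) p') (zz gam lam (xj j) p) xb.
  have bj := cxj _ (ltnW jN).
  have e1 : enorm (x - xb) / N%:R <= beta / N%:R by rewrite ler_pM2r ?invr_gt0.
  have e2 : c * beta / N%:R = beta / N%:R + K * (beta / N%:R) by rewrite /c; ring.
  have e3 : K * (enorm (x - xb) / N%:R) <= K * (beta / N%:R) by rewrite ler_pM2l.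
  have cz : cball xb delta (zz gam lam (xj j.+1) p').
    rewrite /cball /=; move: tri dz lip bz bj e1 e2 e3 hN; lra.
  have [_ _ _ hk] := key_lemma gam0 gl SFg SFl CV d0 L0 cj1 pp' cz.
  by exists p'.
have [p [hp hpb]] := claim N (leqnn N).
have -> : x = xj N.
  rewrite /xj; apply/rowP => i; rewrite !mxE; field; exact: lt0r_neq0.
by exists p.
Qed.

End Homot.
Unset Implicit Arguments.

Theorem proposition4p1 (R : realType) (n : nat) (f : 'rV[R]_n -> \bar R)
  (rho : R) (xbar : 'rV[R]_n) (lbar delta beta : R) (gam lam sig : nat -> R) :
  (* f proper, lsc, bounded below, rho-weakly convex on R^n, rho > 0 *)
  (exists x, f x < +oo)%E -> (forall x, -oo < f x)%E ->
  lower_semicontinuous f ->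
  (exists m : R, forall x, (m%:E <= f x)%E) ->
  0 < rho -> weakly_convex_on rho setT f ->
  (* xbar in dom f, 0 in the limiting subdifferential *)
  (f xbar < +oo)%E -> limiting_subdiff f xbar 0 ->
  (* parameters *)
  0 < lbar ->
  (forall k, lbar < 2 * gam k /\ 2 * gam k < lam k /\ lam k < rho^-1) ->
  (exists M : R, forall k, `|gam k| <= M /\ `|lam k| <= M) ->
  0 < delta ->
  (forall k, standing_fact f rho xbar delta (gam k) /\
             standing_fact f rho xbar delta (lam k)) ->
  (* Assumption 1 *)
  (forall k, convex_fun_on (cball xbar delta) (moreau (gam k) f) /\
             convex_fun_on (cball xbar delta) (moreau (lam k) f)) ->
  (forall k, 0 < sig k < 2 / Lconst rho (gam k) (lam k) ^+ 2) ->
  0 < beta ->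
  (forall k, beta < delta /\
     beta < delta / sig k * (1 - Num.sqrt (kappa rho (gam k) (lam k) (sig k)))) ->
  (* well-definedness of step (a) *)
  (forall k x, cball xbar beta x ->
     exists z, step_a f xbar delta (gam k) (lam k) x z) /\
  (* every run of Algorithm 1 *)
  (forall x z : nat -> 'rV[R]_n,
     cball xbar beta (x 0%N) ->
     (forall k, cball xbar beta (x k) ->
        step_a f xbar delta (gam k) (lam k) (x k) (z k) /\
        x k.+1 = z k - (gam k / (lam k - gam k)) *: (x k - z k)) ->
     (forall k, prox (lam k) f (x k) = [set x k.+1] /\ cball xbar beta (x k)) /\
     (\sum_(0 <= k <oo) ((enorm (x k - x k.+1)) ^+ 2)%:E < +oo)%E).
Proof.
move=> _ hninf _ [m hm] rho0 _ hxb L0 lb0 hpar _ d0 SF CVX _ b0 hbeta.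
have bd : beta < delta by case: (hbeta 0%N).
have P k : [/\ 0 < gam k, 2 * gam k < lam k & lam k < rho^-1].
  by case: (hpar k) => [h1 [h2 h3]]; split => //; lra.
split.
  move=> k x cx.
  case: (P k) => g0 gl lr; case: (SF k) => SFg SFl; case: (CVX k) => CV _.
  have [p [px hp]] := homotopy rho0 g0 gl lr SFg SFl CV L0 b0 bd cx.
  have hz := zz_bound g0 gl hp.
  have cxd : cball xbar delta x by rewrite /cball /=; move: (cx : enorm _ <= _); lra.
  have czd : cball xbar delta (zz (gam k) (lam k) x p).
    by rewrite /cball /=; move: (cx : enorm _ <= _); lra.
  have [_ hg ez _] := key_lemma g0 gl SFg SFl CV d0 L0 cxd px czd.
  exists (zz (gam k) (lam k) x p); split.
    by rewrite /oball /=; move: (cx : enorm _ <= _); lra.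
  by exists ((lam k)^-1 *: (x - p)).
move=> x z hx0 hstep.
have inv k : cball xbar beta (x k) ->
    prox (lam k) f (x k) = [set x k.+1] /\ cball xbar beta (x k.+1).
  move=> cx.
  case: (P k) => g0 gl lr; case: (SF k) => SFg SFl; case: (CVX k) => CV _.
  have l0 : 0 < lam k by lra.
  have lgne : lam k - gam k != 0 by apply: lt0r_neq0; lra.
  have gne : gam k != 0 by exact: lt0r_neq0.
  have lne : lam k != 0 by exact: lt0r_neq0.
  have [[oz [g [hg ez]]] hx1] := hstep k cx.
  have czd : cball xbar delta (z k) by rewrite /cball /=; move: (oz : enorm _ < _); lra.
  have cxd : cball xbar delta (x k) by rewrite /cball /=; move: (cx : enorm _ <= _); lra.
  case: (SFg) => g1 _ g3 g4; case: (SFl) => l1 _ l3 _.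
  have [q hq] := g1 _ czd.
  have pq : prox (gam k) f (z k) q by rewrite hq.
  have hg' := g4 _ _ czd pq.
  have eg := grad_unique hg hg'.
  have exk : x k = z k + (lam k - gam k) *: ((gam k)^-1 *: (z k - q)).
    by rewrite -eg ez subrK.
  have ex1 : x k.+1 = q.
    rewrite hx1 exk; apply/rowP => i; rewrite !mxE; field; rewrite lgne gne //.
  have ev : (lam k)^-1 *: (x k - q) = (gam k)^-1 *: (z k - q).
    rewrite exk; apply/rowP => i; rewrite !mxE; field; rewrite lne gne //.
  have pxq : prox (lam k) f (x k) q.
    rewrite (l3 _ cxd) /= ev; move: pq; rewrite (g3 _ czd) //.
  have [p0 hp0] := l1 _ cxd.
  have qp0 : q = p0 by move: pxq; rewrite hp0.
  split; first by rewrite hp0 ex1 qp0.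
  have ezz : zz (gam k) (lam k) (x k) q = z k.
    rewrite /zz exk; apply/rowP => i; rewrite !mxE; field; rewrite lne gne //.
  have czz : cball xbar delta (zz (gam k) (lam k) (x k) q) by rewrite ezz.
  have [_ _ _ hk] := key_lemma g0 gl SFg SFl CV d0 L0 cxd pxq czz.
  by rewrite /cball /= ex1; move: (cx : enorm _ <= _) hk; lra.
have allc : forall k, cball xbar beta (x k).
  by elim => [//|k IH]; case: (inv k IH).
have hprox k : prox (lam k) f (x k) (x k.+1) by rewrite (proj1 (inv k (allc k))).
split; first by move=> k; split => //; exact: (proj1 (inv k (allc k))).
pose d k := enorm (x k - x k.+1) ^+ 2.
have d_ge0 k : 0 <= d k by rewrite /d sqr_ge0.
have ffin y : (f y < +oo)%E -> f y \is a fin_num.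
  by move=> h; rewrite fin_numE gt_eqF ?hninf // lt_eqF.
have fk1 k : f (x k.+1) \is a fin_num.
  apply: ffin.
  have h := hprox k xbar.
  apply: le_lt_trans (leeDl _ _) _; last first.
    apply: le_lt_trans h _; apply: lte_add_pinfty => //; exact: ltry.
  by rewrite lee_fin mulr_ge0 ?sqr_ge0 // invr_ge0 mulr_ge0 //; case: (P k) => g0 gl _; lra.
pose F k := fine (f (x k)).
have hF k : f (x k.+1) = (F k.+1)%:E by rewrite /F fineK.
have Fm k : m <= F k.+1 by rewrite -lee_fin -hF.
have dec k : d k.+1 <= 2 / rho * (F k.+1 - F k.+2).
  have h := hprox k.+1 (x k.+1).
  rewrite subrr enorm0 expr0n /= mulr0 adde0 !hF -EFinD lee_fin in h.
  case: (P k.+1) => g0 gl lr.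
  have l0 : 0 < lam k.+1 by lra.
  have lrho : lam k.+1 * rho < 1 by rewrite -ltr_pdivlMr // div1r.
  rewrite /d enormB.
  set D := enorm (x k.+2 - x k.+1) ^+ 2 in h *.
  have D0 : 0 <= D by rewrite /D sqr_ge0.
  have e : 2 / rho * ((2 * lam k.+1)^-1 * D) = D / (lam k.+1 * rho).
    by field; rewrite !lt0r_neq0.
  have h2 : 2 / rho * ((2 * lam k.+1)^-1 * D) <= 2 / rho * (F k.+1 - F k.+2).
    by rewrite ler_pM2l ?divr_gt0 //; lra.
  apply: le_trans h2; rewrite e ler_pdivlMr ?mulr_gt0 //.
  exact: ler_piMr D0 (ltW lrho).
have sumb N : \sum_(0 <= k < N.+1) d k + 2 / rho * F N.+1 <= d 0%N + 2 / rho * F 1%N.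
  elim: N => [|N IH]; first by rewrite big_nat1.
  rewrite big_nat_recr //=.
  have := dec N; lra.
set B := d 0%N + 2 / rho * (F 1%N - m).
apply: (@le_lt_trans _ _ B%:E); last exact: ltry.
apply: lime_le.
  by apply: is_cvg_ereal_nneg_natsum => k _; rewrite lee_fin sqr_ge0.
apply: nearW => N; rewrite sumEFin lee_fin.
have hs := sumb N.
have : \sum_(0 <= k < N) d k <= \sum_(0 <= k < N.+1) d k.
  by rewrite big_nat_recr //= lerDl.
have := Fm N; have : 0 < 2 / rho by rewrite divr_gt0.
rewrite /B; nra.
Qed.
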